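(* Let $E$ be a Fréchet space, $E^*$ its topological dual with the weak$^*$ topology, $J=[a,b]$ with $a<b$, and $f,g:J\to E^*$ continuous. Then $$\int_a^b\big\{f(t)(\mu(t))+g(t)(\mu'(t))\big\}\,dt=0$$ for every $\mu\in C^1(J,E)$ with $\mu(a)=\mu(b)=0$ if and only if the map $h:J\to E^*$, $$h(t)=g(t)-\int_a^t f(s)\,ds,$$ is constant on $J$.
   Context: $C^1(J,E)$ denotes continuously differentiable curves $J\to E$. For a continuous $f:J\to E^*$, $\int_a^t f(s)\,ds$ denotes the element $l_t\in E^*$ with $l_t(e)=\int_a^t f(s)(e)\,ds$ for all $e\in E$ (this element exists). *)

(* Defs.v *)
From Stdlib Require Import Reals ClassicalEpsilon.
Open Scope R_scope.

(* A Fréchet space: a real vector space whose topology is given by a countable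
   separating family of seminorms (Fsemi n), complete for that topology. *)
Record Frechet := {
  Fcar :> Type;
  Fzero : Fcar;
  Fadd : Fcar -> Fcar -> Fcar;
  Fopp : Fcar -> Fcar;
  Fscal : R -> Fcar -> Fcar;
  FaddA : forall x y z, Fadd x (Fadd y z) = Fadd (Fadd x y) z;
  FaddC : forall x y, Fadd x y = Fadd y x;
  Fadd0 : forall x, Fadd x Fzero = x;
  FaddN : forall x, Fadd x (Fopp x) = Fzero;
  Fscal1 : forall x, Fscal 1 x = x;
  FscalA : forall c d x, Fscal c (Fscal d x) = Fscal (c * d) x;
  FscalDr : forall c x y, Fscal c (Fadd x y) = Fadd (Fscal c x) (Fscal c y);
  FscalDl : forall c d x, Fscal (c + d) x = Fadd (Fscal c x) (Fscal d x);
  Fsemi : nat -> Fcar -> R;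
  Fsemi_nonneg : forall n x, 0 <= Fsemi n x;
  Fsemi_triangle : forall n x y, Fsemi n (Fadd x y) <= Fsemi n x + Fsemi n y;
  Fsemi_scal : forall n c x, Fsemi n (Fscal c x) = Rabs c * Fsemi n x;
  Fsemi_sep : forall x, (forall n, Fsemi n x = 0) -> x = Fzero;
  Fcomplete : forall u : nat -> Fcar,
    (forall n eps, 0 < eps -> exists N, forall p q, (N <= p)%nat -> (N <= q)%nat ->
        Fsemi n (Fadd (u p) (Fopp (u q))) < eps) ->
    exists x, forall n eps, 0 < eps -> exists N, forall p, (N <= p)%nat ->
        Fsemi n (Fadd (u p) (Fopp x)) < eps
}.

Arguments Fzero {_}. Arguments Fadd {_}. Arguments Fopp {_}.
Arguments Fscal {_}. Arguments Fsemi {_}.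

Definition Fball {E : Frechet} (x : E) (N : nat) (delta : R) (y : E) : Prop :=
  forall n, (n <= N)%nat -> Fsemi n (Fadd y (Fopp x)) < delta.

Record dual (E : Frechet) := {
  dfun :> E -> R;
  dfun_add : forall x y, dfun (Fadd x y) = dfun x + dfun y;
  dfun_scal : forall c x, dfun (Fscal c x) = c * dfun x;
  dfun_cont : forall x eps, 0 < eps -> exists N delta, 0 < delta /\
      forall y, Fball x N delta y -> Rabs (dfun y - dfun x) < eps
}.

(* Continuity of f : J -> E^* for the weak* topology on J = [a,b]:
   the weak* topology is the initial topology of the evaluations, so this
   means every t |-> f t e is continuous on J. *)
Definition wstar_cont_on {E : Frechet} (a b : R) (f : R -> dual E) : Prop :=
  forall e : E, forall t, a <= t <= b -> forall eps, 0 < eps ->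
    exists delta, 0 < delta /\ forall s, a <= s <= b -> Rabs (s - t) < delta ->
      Rabs (f s e - f t e) < eps.

(* mu in C^1(J,E) with derivative mu' (one-sided at the endpoints),
   mu' continuous on J; limits in the topology of E. *)
Definition is_C1 {E : Frechet} (a b : R) (mu mu' : R -> E) : Prop :=
  (forall t, a <= t <= b -> forall N eps, 0 < eps ->
     exists delta, 0 < delta /\ forall h, h <> 0 -> a <= t + h <= b -> Rabs h < delta ->
       Fball (mu' t) N eps (Fscal (/ h) (Fadd (mu (t + h)) (Fopp (mu t))))) /\
  (forall t, a <= t <= b -> forall N eps, 0 < eps ->
     exists delta, 0 < delta /\ forall s, a <= s <= b -> Rabs (s - t) < delta ->
       Fball (mu' t) N eps (mu' s)).

(* Riemann integral of a real function over [a,b] (0 if not integrable;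
   all integrands used below are continuous, hence integrable). *)
Definition Rint (F : R -> R) (a b : R) : R :=
  match excluded_middle_informative (exists _ : Riemann_integrable F a b, True) with
  | left H => RiemannInt (proj1_sig (constructive_indefinite_description _ H))
  | right _ => 0
  end.

(* h(t) = g(t) - \int_a^t f(s) ds, as an element of E^* given by its values. *)
Definition hmap {E : Frechet} (a : R) (f g : R -> dual E) (t : R) (e : E) : R :=
  g t e - Rint (fun s => f s e) a t.

(* Main.v *)
Require Import Defs.
From Stdlib Require Import Reals Lra Lia ClassicalEpsilon Classical FunctionalExtensionality.
From Coquelicot Require Import Coquelicot.
Open Scope R_scope.

Lemma Rabs_m1 : Rabs (-1) = 1.
Proof. rewrite Rabs_left; lra. Qed.

Lemma Fadd0l (E : Frechet) (x : E) : Fadd Fzero x = x.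
Proof. rewrite FaddC; apply Fadd0. Qed.

Lemma Fscal0 (E : Frechet) (x : E) : Fscal 0 x = Fzero.
Proof.
  assert (H : Fscal 0 x = Fadd (Fscal 0 x) (Fscal 0 x)).
  { rewrite <- FscalDl. f_equal. ring. }
  assert (H2 : Fadd (Fscal 0 x) (Fopp (Fscal 0 x)) = Fadd (Fadd (Fscal 0 x) (Fscal 0 x)) (Fopp (Fscal 0 x))) by (rewrite <- H; reflexivity).
  rewrite <- FaddA, !FaddN, Fadd0 in H2. auto.
Qed.

Lemma Fopp_scal (E : Frechet) (x : E) : Fopp x = Fscal (-1) x.
Proof.
  assert (H : Fadd (Fscal (-1) x) x = Fzero).
  { rewrite <- (Fscal1 _ x) at 2. rewrite <- FscalDl. replace (-1+1) with 0 by ring. apply Fscal0. }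
  rewrite <- (Fadd0 _ (Fscal (-1) x)), <- (FaddN _ x), FaddA, H, Fadd0l. auto.
Qed.

Lemma dfun0 (E : Frechet) (l : dual E) : l Fzero = 0.
Proof. rewrite <- (Fscal0 _ Fzero), dfun_scal. ring. Qed.

Lemma dfun_opp (E : Frechet) (l : dual E) x : l (Fopp x) = - l x.
Proof. rewrite Fopp_scal, dfun_scal. ring. Qed.

Lemma dfun_sub (E : Frechet) (l : dual E) x y : l (Fadd x (Fopp y)) = l x - l y.
Proof. rewrite dfun_add, dfun_opp. ring. Qed.

Lemma Fsemi_opp (E : Frechet) n (x : E) : Fsemi n (Fopp x) = Fsemi n x.
Proof. rewrite Fopp_scal, Fsemi_scal, Rabs_m1. ring. Qed.

Lemma Fsub_chain (E : Frechet) (x y z : E) :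
  Fadd z (Fopp x) = Fadd (Fadd z (Fopp y)) (Fadd y (Fopp x)).
Proof.
  rewrite <- FaddA, (FaddA _ (Fopp y)), (FaddC _ (Fopp y) y), FaddN, Fadd0l. auto.
Qed.


Lemma Fsemi_swap (E : Frechet) n (x y : E) :
  Fsemi n (Fadd x (Fopp y)) = Fsemi n (Fadd y (Fopp x)).
Proof.
  rewrite <- Fsemi_opp. f_equal.
  rewrite !Fopp_scal, FscalDr, FscalA. replace (-1 * -1) with 1 by ring.
  rewrite Fscal1, FaddC. auto.
Qed.

Lemma Fadd_sub (E : Frechet) (x y : E) : Fadd (Fadd x y) (Fopp x) = y.
Proof. rewrite (FaddC _ x y), <- FaddA, FaddN, Fadd0. auto. Qed.

Lemma Fsub_self (E : Frechet) (x : E) : Fadd x (Fopp x) = Fzero.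
Proof. apply FaddN. Qed.

Lemma Fsemi0 (E : Frechet) n : Fsemi n (@Fzero E) = 0.
Proof. rewrite <- (Fscal0 _ Fzero), Fsemi_scal, Rabs_R0. ring. Qed.

Fixpoint mmax (E : Frechet) (N : nat) (x : E) : R :=
  match N with
  | O => Fsemi 0 x
  | S N' => Rmax (mmax E N' x) (Fsemi (S N') x)
  end.
Arguments mmax {E}.

Lemma mmax_ge (E : Frechet) N (x : E) n : (n <= N)%nat -> Fsemi n x <= mmax N x.
Proof.
  induction N; intros H; simpl.
  - inversion H; lra.
  - inversion H; subst. apply Rmax_r. eapply Rle_trans; [apply IHN; lia|apply Rmax_l].
Qed.

Lemma mmax_le (E : Frechet) N (x : E) d : (forall n, (n <= N)%nat -> Fsemi n x <= d) -> mmax N x <= d.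
Proof.
  induction N; intros H; simpl. apply H; lia.
  apply Rmax_lub. apply IHN; intros; apply H; lia. apply H; lia.
Qed.

Lemma mmax_lt (E : Frechet) N (x : E) d : (forall n, (n <= N)%nat -> Fsemi n x < d) -> mmax N x < d.
Proof.
  induction N; intros H; simpl. apply H; lia.
  apply Rmax_lub_lt. apply IHN; intros; apply H; lia. apply H; lia.
Qed.

Lemma mmax_nonneg (E : Frechet) N (x : E) : 0 <= mmax N x.
Proof. eapply Rle_trans; [apply Fsemi_nonneg | apply (mmax_ge _ N x 0); lia]. Qed.

Lemma mmax_mono (E : Frechet) N M (x : E) : (N <= M)%nat -> mmax N x <= mmax M x.
Proof. intros H. apply mmax_le; intros; apply mmax_ge; lia. Qed.

Lemma mmax_tri (E : Frechet) N (x y : E) : mmax N (Fadd x y) <= mmax N x + mmax N y.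
Proof.
  apply mmax_le; intros n Hn. eapply Rle_trans; [apply Fsemi_triangle|].
  apply Rplus_le_compat; apply mmax_ge; auto.
Qed.

Lemma mmax_scal (E : Frechet) N c (x : E) : mmax N (Fscal c x) = Rabs c * mmax N x.
Proof.
  induction N; simpl. apply Fsemi_scal.
  rewrite IHN, Fsemi_scal. apply RmaxRmult. apply Rabs_pos.
Qed.

Lemma mmax_opp (E : Frechet) N (x : E) : mmax N (Fopp x) = mmax N x.
Proof. rewrite Fopp_scal, mmax_scal, Rabs_m1. ring. Qed.

Lemma mmax_swap (E : Frechet) N (x y : E) :
  mmax N (Fadd x (Fopp y)) = mmax N (Fadd y (Fopp x)).
Proof.
  rewrite <- mmax_opp. f_equal.
  rewrite !Fopp_scal, FscalDr, FscalA. replace (-1 * -1) with 1 by ring.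
  rewrite Fscal1, FaddC. auto.
Qed.

Lemma mmax0 (E : Frechet) N : mmax N (@Fzero E) = 0.
Proof. rewrite <- (Fscal0 _ Fzero), mmax_scal, Rabs_R0. ring. Qed.

Lemma Fball_mmax (E : Frechet) (x : E) N d y : Fball x N d y <-> mmax N (Fadd y (Fopp x)) < d.
Proof.
  split; intros H.
  - apply mmax_lt; auto.
  - intros n Hn. eapply Rle_lt_trans; [apply mmax_ge; eauto|auto].
Qed.

Definition cont_on (a b : R) (k : R -> R) : Prop :=
  forall t, a <= t <= b -> forall eps, 0 < eps -> exists delta, 0 < delta /\
    forall s, a <= s <= b -> Rabs (s - t) < delta -> Rabs (k s - k t) < eps.

Definition der_on (a b : R) (k k' : R -> R) : Prop :=
  forall t, a <= t <= b -> forall eps, 0 < eps -> exists delta, 0 < delta /\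
    forall s, a <= s <= b -> Rabs (s - t) < delta ->
      Rabs (k s - k t - (s - t) * k' t) <= eps * Rabs (s - t).

Definition clamp (a b t : R) := Rmax a (Rmin b t).

Lemma clamp_in a b t : a <= b -> a <= clamp a b t <= b.
Proof. intros. unfold clamp, Rmax, Rmin. repeat destruct Rle_dec; lra. Qed.

Lemma clamp_id a b t : a <= t <= b -> clamp a b t = t.
Proof. intros. unfold clamp, Rmax, Rmin. repeat destruct Rle_dec; lra. Qed.

Lemma clamp_lip a b s t : a <= b -> Rabs (clamp a b s - clamp a b t) <= Rabs (s - t).
Proof.
  intros. unfold clamp, Rmax, Rmin. repeat destruct Rle_dec;
  unfold Rabs; repeat destruct Rcase_abs; lra.
Qed.

Lemma cont_clamp a b k : a <= b -> cont_on a b k -> forall x, continuity_pt (fun t => k (clamp a b t)) x.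
Proof.
  intros hab hk x eps heps.
  destruct (hk (clamp a b x) (clamp_in a b x hab) eps heps) as [d [hd H]].
  exists d; split; [lra|]. intros y [_ hy]. simpl in *. unfold R_dist in *.
  apply H. apply clamp_in; auto. eapply Rle_lt_trans; [apply clamp_lip; auto | auto].
Qed.

Lemma clamp_back a b k : (forall x, a <= x <= b -> continuity_pt (fun t => k (clamp a b t)) x) -> cont_on a b k.
Proof.
  intros H t ht eps heps. destruct (H t ht eps heps) as [d [hd H2]].
  exists d; split; [lra|]. intros s hs hst.
  specialize (H2 s). simpl in H2. unfold R_dist in H2.
  rewrite !clamp_id in H2 by auto. destruct (Req_dec s t) as [->|hne].
  rewrite Rminus_eq_0, Rabs_R0; auto.
  apply H2. split; [split; [exact I|auto]|auto].
Qed.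

Lemma cont_plus a b k1 k2 : a <= b -> cont_on a b k1 -> cont_on a b k2 -> cont_on a b (fun t => k1 t + k2 t).
Proof.
  intros hab h1 h2. apply clamp_back; intros.
  apply (continuity_pt_plus (fun t => k1 (clamp a b t)) (fun t => k2 (clamp a b t))); apply cont_clamp; auto.
Qed.

Lemma cont_minus a b k1 k2 : a <= b -> cont_on a b k1 -> cont_on a b k2 -> cont_on a b (fun t => k1 t - k2 t).
Proof.
  intros hab h1 h2. apply clamp_back; intros.
  apply (continuity_pt_minus (fun t => k1 (clamp a b t)) (fun t => k2 (clamp a b t))); apply cont_clamp; auto.
Qed.

Lemma cont_mult a b k1 k2 : a <= b -> cont_on a b k1 -> cont_on a b k2 -> cont_on a b (fun t => k1 t * k2 t).
Proof.
  intros hab h1 h2. apply clamp_back; intros.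
  apply (continuity_pt_mult (fun t => k1 (clamp a b t)) (fun t => k2 (clamp a b t))); apply cont_clamp; auto.
Qed.

Lemma cont_const a b c : cont_on a b (fun _ => c).
Proof. intros t ht eps heps. exists 1; split; [lra|]. intros. rewrite Rminus_eq_0, Rabs_R0; auto. Qed.

Lemma cont_ex a b k t1 t2 : a <= b -> cont_on a b k -> a <= t1 <= b -> a <= t2 <= b -> ex_RInt k t1 t2.
Proof.
  intros hab hk h1 h2.
  apply (ex_RInt_ext (fun t => k (clamp a b t))).
  - intros x hx. rewrite clamp_id; auto. unfold Rmin, Rmax in hx. destruct Rle_dec; lra.
  - apply (@ex_RInt_continuous R_CompleteNormedModule). intros z _. apply continuity_pt_filterlim. apply cont_clamp; auto.
Qed.

Lemma Rint_RInt F a b : ex_RInt F a b -> Rint F a b = RInt F a b.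
Proof.
  intros H. unfold Rint. destruct excluded_middle_informative as [e|n].
  - rewrite (RInt_Reals F a b (proj1_sig (constructive_indefinite_description _ e))). reflexivity.
  - exfalso. apply n. exists (ex_RInt_Reals_0 _ _ _ H). auto.
Qed.

Lemma dpl_der F t l : derivable_pt_lim F t l -> forall eps, 0 < eps -> exists delta, 0 < delta /\
   forall s, Rabs (s - t) < delta -> Rabs (F s - F t - (s - t) * l) <= eps * Rabs (s - t).
Proof.
  intros H eps heps. destruct (H eps heps) as [[d hd] Hd]. exists d; split; auto.
  intros s hs. destruct (Req_dec s t) as [->|hne].
  - replace (F t - F t - (t - t) * l) with 0 by ring. rewrite Rminus_eq_0, Rabs_R0. lra.
  - assert (hh : s - t <> 0) by lra. specialize (Hd (s - t) hh hs).
    replace (t + (s - t)) with s in Hd by ring.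
    replace (F s - F t - (s - t) * l) with ((s - t) * ((F s - F t) / (s - t) - l)) by (field; auto).
    rewrite Rabs_mult. rewrite Rmult_comm. apply Rmult_le_compat_r. apply Rabs_pos. lra.
Qed.

Lemma FTC1 a b k : a <= b -> cont_on a b k -> der_on a b (fun t => RInt k a t) k.
Proof.
  intros hab hk t ht eps heps.
  set (kc := fun t => k (clamp a b t)).
  assert (hc : forall x, continuous kc x).
  { intros x. apply continuity_pt_filterlim. apply cont_clamp; auto. }
  assert (hd : is_derive (RInt kc a) t (kc t)).
  { apply (is_derive_RInt kc (RInt kc a) a t). apply filter_forall. intros x. apply (@RInt_correct R_CompleteNormedModule).
    apply (@ex_RInt_continuous R_CompleteNormedModule). intros; auto. apply hc. }
  apply is_derive_Reals in hd.
  destruct (dpl_der _ _ _ hd eps heps) as [d [hd0 H]]. exists d; split; auto.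
  intros s hs hst. specialize (H s hst).
  assert (E : forall x, a <= x <= b -> RInt k a x = RInt kc a x).
  { intros x hx. apply RInt_ext. intros y hy. unfold kc. rewrite clamp_id; auto.
    unfold Rmin, Rmax in hy. destruct Rle_dec; lra. }
  rewrite !E by (auto; lra). unfold kc in H at 3. rewrite clamp_id in H by auto. auto.
Qed.

Lemma der_cont a b k k' : der_on a b k k' -> cont_on a b k.
Proof.
  intros H t ht eps heps. destruct (H t ht 1 Rlt_0_1) as [d [hd Hd]].
  exists (Rmin d (eps / (1 + Rabs (k' t)))). split.
  { apply Rmin_pos; auto. apply Rdiv_lt_0_compat; auto. pose proof (Rabs_pos (k' t)); lra. }
  intros s hs hst. assert (h1 : Rabs (s - t) < d) by (apply (Rlt_le_trans _ _ _ hst (Rmin_l _ _))).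
  assert (h2 : Rabs (s - t) < eps / (1 + Rabs (k' t))) by (apply (Rlt_le_trans _ _ _ hst (Rmin_r _ _))).
  specialize (Hd s hs h1).
  replace (k s - k t) with ((k s - k t - (s - t) * k' t) + (s - t) * k' t) by ring.
  eapply Rle_lt_trans; [apply Rabs_triang|]. rewrite Rabs_mult.
  assert (Rabs (s - t) * (1 + Rabs (k' t)) < eps).
  { pose proof (Rabs_pos (k' t)). apply Rmult_lt_reg_r with (/ (1 + Rabs (k' t))).
    apply Rinv_0_lt_compat; lra. rewrite Rmult_assoc, Rinv_r by lra. lra. }
  nra.
Qed.

Lemma FTC2R a b k k' : a < b -> der_on a b k k' -> cont_on a b k' -> RInt k' a b = k b - k a.
Proof.
  intros hab hk hk'.
  set (G := fun t => RInt k' a t).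
  assert (hG : der_on a b G k') by (apply FTC1; auto; lra).
  set (D := fun t => G (clamp a b t) - k (clamp a b t)).
  assert (hDc : forall x, continuity_pt D x).
  { intros x. apply (cont_clamp a b (fun t => G t - k t)). lra.
    apply cont_minus. lra. eapply der_cont; eauto. eapply der_cont; eauto. }
  destruct (MVT_gen D a b (fun _ => 0)) as [c [_ hc]].
  - rewrite Rmin_left, Rmax_right by lra. intros x hx. apply is_derive_Reals.
    intros eps heps.
    destruct (hG x ltac:(lra) (eps/4) ltac:(lra)) as [d1 [hd1 H1]].
    destruct (hk x ltac:(lra) (eps/4) ltac:(lra)) as [d2 [hd2 H2]].
    assert (hpos : 0 < Rmin (Rmin d1 d2) (Rmin (x - a) (b - x))).
    { repeat apply Rmin_pos; lra. }
    exists (mkposreal _ hpos). simpl. intros h hh hlt.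
    assert (l1 := Rmin_l (Rmin d1 d2) (Rmin (x - a) (b - x))).
    assert (l2 := Rmin_r (Rmin d1 d2) (Rmin (x - a) (b - x))).
    assert (l3 := Rmin_l d1 d2). assert (l4 := Rmin_r d1 d2).
    assert (l5 := Rmin_l (x - a) (b - x)). assert (l6 := Rmin_r (x - a) (b - x)).
    assert (hxh : a <= x + h <= b).
    { destruct (Rabs_def2 h (Rmin (Rmin d1 d2) (Rmin (x - a) (b - x)))); auto. lra. }
    assert (hs : Rabs (x + h - x) < d1) by (replace (x + h - x) with h by ring; lra).
    assert (hs' : Rabs (x + h - x) < d2) by (replace (x + h - x) with h by ring; lra).
    specialize (H1 (x + h) hxh hs). specialize (H2 (x + h) hxh hs').
    replace (x + h - x) with h in * by ring.
    unfold D. rewrite !clamp_id by lra.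
    replace ((G (x + h) - k (x + h) - (G x - k x)) / h - 0)
      with (((G (x + h) - G x - h * k' x) - (k (x + h) - k x - h * k' x)) / h) by (field; auto).
    unfold Rdiv. rewrite Rabs_mult, Rabs_inv.
    apply Rmult_lt_reg_r with (Rabs h). apply Rabs_pos_lt; auto.
    rewrite Rmult_assoc, Rinv_l by (apply Rabs_no_R0; auto).
    eapply Rle_lt_trans. rewrite Rmult_1_r. unfold Rminus at 1. apply Rabs_triang.
    rewrite Rabs_Ropp. assert (0 < Rabs h) by (apply Rabs_pos_lt; auto). nra.
  - rewrite Rmin_left, Rmax_right by lra. intros; auto.
  - unfold D in hc. rewrite !clamp_id in hc by lra. unfold G in *.
    assert (Hz : RInt k' a a = 0) by (rewrite RInt_point; reflexivity). rewrite Hz in hc. lra.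
Qed.

Lemma FTC2 a b k k' : a < b -> der_on a b k k' -> cont_on a b k' -> Rint k' a b = k b - k a.
Proof.
  intros. rewrite Rint_RInt. apply FTC2R; auto. apply (cont_ex a b); auto; lra.
Qed.

Lemma der_unique a b k k1 k2 : a < b -> der_on a b k k1 -> der_on a b k k2 ->
  forall t, a <= t <= b -> k1 t = k2 t.
Proof.
  intros hab h1 h2 t ht.
  apply Rminus_diag_uniq. apply Rabs_eq_0.
  apply Rle_antisym; [|apply Rabs_pos].
  apply Rnot_lt_le. intros hpos.
  set (eps := Rabs (k1 t - k2 t) / 4).
  destruct (h1 t ht eps ltac:(unfold eps; lra)) as [d1 [hd1 H1]].
  destruct (h2 t ht eps ltac:(unfold eps; lra)) as [d2 [hd2 H2]].
  set (d := Rmin (Rmin d1 d2) ((b - a) / 2) / 2).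
  assert (hd0 : 0 < Rmin (Rmin d1 d2) ((b - a) / 2)) by (repeat apply Rmin_pos; lra).
  assert (hd : 0 < d) by (unfold d; lra).
  assert (l1 := Rmin_l (Rmin d1 d2) ((b - a) / 2)). assert (l2 := Rmin_r (Rmin d1 d2) ((b - a) / 2)).
  assert (l3 := Rmin_l d1 d2). assert (l4 := Rmin_r d1 d2).
  assert (exists s, a <= s <= b /\ Rabs (s - t) = d) as [s [hs hsd]].
  { destruct (Rle_dec (t + d) b).
    - exists (t + d). split. lra. replace (t + d - t) with d by ring. apply Rabs_pos_eq; lra.
    - exists (t - d). split. unfold d in *. lra. replace (t - d - t) with (- d) by ring.
      rewrite Rabs_Ropp. apply Rabs_pos_eq; lra. }
  assert (hl1 : Rabs (s - t) < d1) by (unfold d in *; lra).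
  assert (hl2 : Rabs (s - t) < d2) by (unfold d in *; lra).
  specialize (H1 s hs hl1). specialize (H2 s hs hl2).
  assert (Rabs ((s - t) * (k1 t - k2 t)) <= 2 * eps * Rabs (s - t)).
  { replace ((s - t) * (k1 t - k2 t)) with ((k s - k t - (s - t) * k2 t) - (k s - k t - (s - t) * k1 t)) by ring.
    unfold Rminus at 1. eapply Rle_trans; [apply Rabs_triang|]. rewrite Rabs_Ropp. lra. }
  rewrite Rabs_mult, hsd in H. unfold eps in H. nra.
Qed.

Lemma der_const a b k : (forall t, a <= t <= b -> k t = 0) -> der_on a b k (fun _ => 0).
Proof.
  intros H t ht eps heps. exists 1. split; [lra|]. intros s hs _.
  rewrite !H by auto. replace (0 - 0 - (s - t) * 0) with 0 by ring. rewrite Rabs_R0.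
  apply Rmult_le_pos; [lra|apply Rabs_pos].
Qed.

Lemma zero_int a b q : a < b -> cont_on a b q -> (forall t, a <= t <= b -> 0 <= q t) ->
  RInt q a b = 0 -> forall t, a <= t <= b -> q t = 0.
Proof.
  intros hab hq hpos hint.
  set (Q := fun t => RInt q a t).
  assert (HQ : forall t, a <= t <= b -> Q t = 0).
  { intros t ht. unfold Q.
    assert (h1 : 0 <= RInt q a t).
    { apply RInt_ge_0. lra. apply (cont_ex a b); auto; lra. intros; apply hpos; lra. }
    assert (h2 : 0 <= RInt q t b).
    { apply RInt_ge_0. lra. apply (cont_ex a b); auto; lra. intros; apply hpos; lra. }
    assert (h3 := RInt_Chasles q a t b ltac:(apply (cont_ex a b); auto; lra) ltac:(apply (cont_ex a b); auto; lra)).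
    change (plus (RInt q a t) (RInt q t b)) with (RInt q a t + RInt q t b) in h3. lra. }
  intros t ht. symmetry.
  apply (der_unique a b Q (fun _ => 0) q hab); auto.
  apply der_const; auto. apply FTC1; auto; lra.
Qed.

Lemma der_mult a b k1 k1' k2 k2' : der_on a b k1 k1' -> der_on a b k2 k2' ->
  der_on a b (fun t => k1 t * k2 t) (fun t => k1' t * k2 t + k1 t * k2' t).
Proof.
  intros h1 h2 t ht eps heps.
  set (M2 := Rabs (k2 t) + 1). set (L1 := Rabs (k1' t) + 1). set (K1 := Rabs (k1 t) + 1).
  assert (hM2 : 0 < M2) by (unfold M2; pose proof (Rabs_pos (k2 t)); lra).
  assert (hL1 : 0 < L1) by (unfold L1; pose proof (Rabs_pos (k1' t)); lra).
  assert (hK1 : 0 < K1) by (unfold K1; pose proof (Rabs_pos (k1 t)); lra).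
  destruct (h1 t ht (eps / (3 * M2))) as [da [hda Ha]]. apply Rdiv_lt_0_compat; lra.
  destruct (der_cont a b k2 k2' h2 t ht (Rmin 1 (eps / (3 * L1)))) as [dc [hdc Hc]].
  apply Rmin_pos; [lra|apply Rdiv_lt_0_compat; lra].
  destruct (h2 t ht (eps / (3 * K1))) as [db [hdb Hb]]. apply Rdiv_lt_0_compat; lra.
  exists (Rmin da (Rmin dc db)). split. repeat apply Rmin_pos; auto.
  intros s hs hst.
  assert (l1 := Rmin_l da (Rmin dc db)). assert (l2 := Rmin_r da (Rmin dc db)).
  assert (l3 := Rmin_l dc db). assert (l4 := Rmin_r dc db).
  specialize (Ha s hs ltac:(lra)). specialize (Hb s hs ltac:(lra)). specialize (Hc s hs ltac:(lra)).
  set (A := k1 s - k1 t - (s - t) * k1' t) in *.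
  set (B := k2 s - k2 t - (s - t) * k2' t) in *.
  assert (Hc1 : Rabs (k2 s - k2 t) < 1) by (eapply Rlt_le_trans; [apply Hc|apply Rmin_l]).
  assert (Hc2 : Rabs (k2 s - k2 t) < eps / (3 * L1)) by (eapply Rlt_le_trans; [apply Hc|apply Rmin_r]).
  assert (Hk2s : Rabs (k2 s) <= M2).
  { unfold M2. replace (k2 s) with (k2 t + (k2 s - k2 t)) by ring.
    eapply Rle_trans; [apply Rabs_triang|]. lra. }
  replace (k1 s * k2 s - k1 t * k2 t - (s - t) * (k1' t * k2 t + k1 t * k2' t))
    with (A * k2 s + ((s - t) * k1' t * (k2 s - k2 t) + k1 t * B)) by (unfold A, B; ring).
  eapply Rle_trans; [apply Rabs_triang|].
  eapply Rle_trans; [apply Rplus_le_compat_l; apply Rabs_triang|].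
  rewrite !Rabs_mult.
  assert (e1 : Rabs A * Rabs (k2 s) <= eps / 3 * Rabs (s - t)).
  { apply Rle_trans with (eps / (3 * M2) * Rabs (s - t) * M2).
    apply Rmult_le_compat; auto using Rabs_pos.
    right. field. lra. }
  assert (e2 : Rabs (s - t) * Rabs (k1' t) * Rabs (k2 s - k2 t) <= eps / 3 * Rabs (s - t)).
  { apply Rle_trans with (Rabs (s - t) * L1 * (eps / (3 * L1))).
    apply Rmult_le_compat. apply Rmult_le_pos; apply Rabs_pos. apply Rabs_pos.
    apply Rmult_le_compat_l. apply Rabs_pos. unfold L1; lra. lra.
    right. field. lra. }
  assert (e3 : Rabs (k1 t) * Rabs B <= eps / 3 * Rabs (s - t)).
  { apply Rle_trans with (K1 * (eps / (3 * K1) * Rabs (s - t))).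
    apply Rmult_le_compat; auto using Rabs_pos. unfold K1; lra.
    right. field. lra. }
  lra.
Qed.

Lemma nat_above r : exists n : nat, r < INR n.
Proof.
  destruct (Rle_dec r 0) as [hr|hr]. exists 1%nat. simpl. lra.
  destruct (archimed_cor1 (/ r)) as [n [hn hn0]]. apply Rinv_0_lt_compat; lra.
  exists n. assert (0 < INR n) by (apply lt_0_INR; auto).
  rewrite <- (Rinv_inv r). rewrite <- (Rinv_inv (INR n)).
  apply Rinv_lt_contravar; auto. apply Rmult_lt_0_compat; apply Rinv_0_lt_compat; lra.
Qed.

Fixpoint iter_seq {X : Type} (x0 : X) (st : nat -> X -> X) (k : nat) : X :=
  match k with O => x0 | S k' => st k' (iter_seq x0 st k') end.

Lemma baire (E : Frechet) (P : nat -> E -> Prop) :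
  (forall k x, ~ P k x -> exists N d, 0 < d /\ forall z, mmax N (Fadd z (Fopp x)) < d -> ~ P k z) ->
  (forall x, exists k, P k x) ->
  exists k x0 N d, 0 < d /\ forall y, mmax N (Fadd y (Fopp x0)) < d -> P k y.
Proof.
  intros HC HU. apply NNPP. intros Hn.
  assert (H : forall k x0 N d, 0 < d -> exists y, mmax N (Fadd y (Fopp x0)) < d /\ ~ P k y).
  { intros k x0 N d hd. apply NNPP. intros H1. apply Hn. exists k, x0, N, d. split; auto.
    intros y hy. apply NNPP. intros hy'. apply H1. exists y. auto. }
  clear Hn.
  assert (Hstep : forall (k : nat) (p : E * nat * R), exists q : E * nat * R,
     0 < snd p -> 0 < snd q /\ snd q <= / INR (S k) /\ (snd (fst p) <= snd (fst q))%nat /\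
       (k <= snd (fst q))%nat /\
       forall z, mmax (snd (fst q)) (Fadd z (Fopp (fst (fst q)))) <= snd q ->
          mmax (snd (fst p)) (Fadd z (Fopp (fst (fst p)))) < snd p /\ ~ P k z).
  { intros k [[x N] d]. simpl. destruct (Rlt_dec 0 d) as [hd|hd]; [|exists (x, N, d); intros; lra].
    destruct (H k x N d hd) as [y [hy hPy]].
    destruct (HC k y hPy) as [N1 [d1 [hd1 HN1]]].
    set (m := mmax N (Fadd y (Fopp x))).
    assert (hSk : 0 < INR (S k)) by (apply lt_0_INR; lia).
    assert (l1 := Rmin_l (Rmin (d1 / 2) ((d - m) / 2)) (/ INR (S k))).
    assert (l2 := Rmin_r (Rmin (d1 / 2) ((d - m) / 2)) (/ INR (S k))).
    assert (l3 := Rmin_l (d1 / 2) ((d - m) / 2)). assert (l4 := Rmin_r (d1 / 2) ((d - m) / 2)).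
    set (d' := Rmin (Rmin (d1 / 2) ((d - m) / 2)) (/ INR (S k))) in *.
    exists (y, Nat.max (Nat.max N N1) k, d'). simpl. intros _.
    split. unfold d'. repeat apply Rmin_pos; try lra. unfold m; lra. apply Rinv_0_lt_compat; auto.
    split. auto. split. lia. split. lia.
    intros z hz. split.
    - rewrite (Fsub_chain _ x y z). eapply Rle_lt_trans; [apply mmax_tri|].
      assert (mmax N (Fadd z (Fopp y)) <= d').
      { eapply Rle_trans; [|apply hz]. apply mmax_mono. lia. }
      unfold m in *. lra.
    - apply HN1. eapply Rle_lt_trans; [apply (mmax_mono _ N1 (Nat.max (Nat.max N N1) k)); lia|].
      lra. }
  pose (step := fun k p => proj1_sig (constructive_indefinite_description _ (Hstep k p))).
  assert (Hs := fun k p => proj2_sig (constructive_indefinite_description _ (Hstep k p))).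
  fold step in Hs. simpl in Hs.
  set (sq := iter_seq (Fzero, 0%nat, 1) step).
  set (xs := fun k => fst (fst (sq k))). set (Ns := fun k => snd (fst (sq k))). set (ds := fun k => snd (sq k)).
  assert (Hpos : forall k, 0 < ds k).
  { induction k. unfold ds; simpl; lra. unfold ds in *. simpl. apply (Hs k (sq k) IHk). }
  assert (HS : forall k, ds (S k) <= / INR (S k) /\ (Ns k <= Ns (S k))%nat /\ (k <= Ns (S k))%nat /\
       forall z, mmax (Ns (S k)) (Fadd z (Fopp (xs (S k)))) <= ds (S k) ->
          mmax (Ns k) (Fadd z (Fopp (xs k))) < ds k /\ ~ P k z).
  { intros k. apply (Hs k (sq k) (Hpos k)). }
  set (PB := fun k z => mmax (Ns k) (Fadd z (Fopp (xs k))) <= ds k).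
  assert (Hchain : forall j k z, PB (k + j)%nat z -> PB k z).
  { induction j; intros k z hz. rewrite Nat.add_0_r in hz; auto.
    apply IHj. replace (k + j)%nat with (Init.Nat.pred (S (k + j))) by lia.
    replace (k + S j)%nat with (S (k + j)) in hz by lia.
    destruct (HS (k + j)%nat) as [_ [_ [_ H4]]]. unfold PB. simpl. left. apply (H4 z hz). }
  assert (Hself : forall p k, (k <= p)%nat -> PB k (xs p)).
  { intros p k hkp. replace p with (k + (p - k))%nat by lia. apply (Hchain (p - k)%nat).
    replace (k + (p - k))%nat with p by lia. unfold PB. rewrite FaddN, mmax0. left; apply Hpos. }
  assert (Hcauchy : forall n eps, 0 < eps -> exists M, forall p q, (M <= p)%nat -> (M <= q)%nat ->
        Fsemi n (Fadd (xs p) (Fopp (xs q))) < eps).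
  { intros n eps heps. destruct (archimed_cor1 (eps / 2)) as [N0 [hN0 hN0p]]. lra.
    set (K := Nat.max n N0). exists (S K). intros p q hp hq.
    assert (hK : ds (S K) < eps / 2).
    { destruct (HS K) as [h1 _]. eapply Rle_lt_trans; [apply h1|]. eapply Rle_lt_trans; [|apply hN0].
      apply Rinv_le_contravar. apply lt_0_INR; lia. apply le_INR. unfold K; lia. }
    assert (hN : (n <= Ns (S K))%nat) by (destruct (HS K) as [_ [_ [h3 _]]]; unfold K in *; lia).
    rewrite (Fsub_chain _ (xs q) (xs (S K)) (xs p)).
    eapply Rle_lt_trans; [apply Fsemi_triangle|].
    assert (A1 := Hself p (S K) hp). assert (A2 := Hself q (S K) hq). unfold PB in A1, A2.
    rewrite mmax_swap in A2.
    assert (Fsemi n (Fadd (xs p) (Fopp (xs (S K)))) <= ds (S K)) by (eapply Rle_trans; [apply mmax_ge; eauto|auto]).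
    assert (Fsemi n (Fadd (xs (S K)) (Fopp (xs q))) <= ds (S K)) by (eapply Rle_trans; [apply mmax_ge; eauto|auto]).
    lra. }
  destruct (Fcomplete E xs Hcauchy) as [x Hx].
  assert (Hlim : forall k, PB k x).
  { intros k. unfold PB. apply mmax_le. intros n hn. apply le_epsilon. intros eps heps.
    destruct (Hx n eps heps) as [M HM].
    set (p := Nat.max M k). specialize (HM p ltac:(unfold p; lia)).
    rewrite (Fsub_chain _ (xs k) (xs p) x). eapply Rle_trans; [apply Fsemi_triangle|].
    rewrite Fsemi_swap in HM.
    assert (A1 := Hself p k ltac:(unfold p; lia)). unfold PB in A1.
    assert (Fsemi n (Fadd (xs p) (Fopp (xs k))) <= ds k) by (eapply Rle_trans; [apply mmax_ge; eauto|auto]).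
    lra. }
  destruct (HU x) as [k hk].
  destruct (HS k) as [_ [_ [_ H4]]]. apply (proj2 (H4 x (Hlim (S k)))). auto.
Qed.

Lemma wcont (E : Frechet) a b (f : R -> dual E) x : wstar_cont_on a b f -> cont_on a b (fun s => f s x).
Proof. intros H t ht eps heps. apply H; auto. Qed.

Lemma cont_abs a b k : cont_on a b k -> cont_on a b (fun t => Rabs (k t)).
Proof.
  intros H t ht eps heps. destruct (H t ht eps heps) as [d [hd Hd]]. exists d; split; auto.
  intros s hs hst. eapply Rle_lt_trans; [apply Rabs_triang_inv2|]. auto.
Qed.

Lemma bounded_pt (E : Frechet) a b (f : R -> dual E) : a <= b -> wstar_cont_on a b f ->
  forall x, exists k : nat, forall s, a <= s <= b -> Rabs (f s x) <= INR k.
Proof.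
  intros hab hf x.
  assert (hc := cont_clamp a b _ hab (cont_abs _ _ _ (wcont E a b f x hf))).
  destruct (continuity_ab_maj _ a b hab (fun c _ => hc c)) as [Mx [HM hMx]].
  destruct (nat_above (Rabs (f (clamp a b Mx) x))) as [k hk]. exists k.
  intros s hs. specialize (HM s hs). simpl in HM. rewrite clamp_id in HM by auto. lra.
Qed.

Lemma equicont (E : Frechet) a b (f : R -> dual E) : a <= b -> wstar_cont_on a b f ->
  exists N C, 0 <= C /\ forall s, a <= s <= b -> forall x, Rabs (f s x) <= C * mmax N x.
Proof.
  intros hab hf.
  set (P := fun (k : nat) (x : E) => forall s, a <= s <= b -> Rabs (f s x) <= INR k).
  destruct (baire E P) as [k [x0 [N [d [hd Hb]]]]].
  - intros k x hnP. unfold P in hnP. apply not_all_ex_not in hnP as [s hs].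
    apply imply_to_and in hs as [hs hgt]. apply Rnot_le_lt in hgt.
    destruct (dfun_cont E (f s) x (Rabs (f s x) - INR k) ltac:(lra)) as [N [d [hd Hd]]].
    exists N, d. split; auto. intros z hz hPz.
    specialize (Hd z (proj2 (Fball_mmax E x N d z) hz)). specialize (hPz s hs).
    assert (Rabs (f s x) <= Rabs (f s z) + Rabs (f s z - f s x)).
    { replace (f s x) with (f s z - (f s z - f s x)) at 1 by ring.
      unfold Rminus at 1. eapply Rle_trans; [apply Rabs_triang|]. rewrite Rabs_Ropp. lra. }
    lra.
  - intros x. apply bounded_pt; auto.
  - assert (Hsmall : forall y, mmax N y < d -> forall s, a <= s <= b -> Rabs (f s y) <= 2 * INR k).
    { intros y hy s hs.
      assert (h1 : P k (Fadd x0 y)) by (apply Hb; rewrite Fadd_sub; auto).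
      assert (h2 : P k x0) by (apply Hb; rewrite FaddN, mmax0; auto).
      specialize (h1 s hs). specialize (h2 s hs). rewrite dfun_add in h1.
      replace (f s y) with ((f s x0 + f s y) - f s x0) by ring.
      unfold Rminus. eapply Rle_trans; [apply Rabs_triang|]. rewrite Rabs_Ropp. lra. }
    assert (hk : 0 <= INR k) by apply pos_INR.
    exists N, (4 * INR k / d). split. apply Rmult_le_pos; [lra|]. left; apply Rinv_0_lt_compat; auto.
    intros s hs x. set (m := mmax N x).
    assert (hm : 0 <= m) by apply mmax_nonneg.
    destruct (Req_dec m 0) as [hm0|hm0].
    + rewrite hm0, Rmult_0_r. apply Rnot_lt_le. intros hpos.
      set (lam := (2 * INR k + 1) / Rabs (f s x)).
      assert (hlam : 0 < lam) by (unfold lam; apply Rdiv_lt_0_compat; lra).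
      assert (Hy := Hsmall (Fscal lam x) ltac:(rewrite mmax_scal; fold m; rewrite hm0; lra) s hs).
      rewrite dfun_scal, Rabs_mult, (Rabs_pos_eq lam) in Hy by lra.
      unfold lam in Hy. field_simplify in Hy; lra.
    + assert (hmp : 0 < m) by lra.
      set (lam := d / (2 * m)).
      assert (hlam : 0 < lam) by (unfold lam; apply Rdiv_lt_0_compat; lra).
      assert (Hy := Hsmall (Fscal lam x) ltac:(rewrite mmax_scal; fold m; rewrite Rabs_pos_eq by lra; unfold lam; field_simplify; lra) s hs).
      rewrite dfun_scal, Rabs_mult, (Rabs_pos_eq lam) in Hy by lra.
      unfold lam in Hy.
      apply Rmult_le_reg_l with (d / (2 * m)). apply Rdiv_lt_0_compat; lra.
      replace (d / (2 * m) * (4 * INR k / d * m)) with (2 * INR k) by (field; lra). auto.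
Qed.

Lemma Fsub_add (E : Frechet) (x y : E) : Fadd (Fadd x (Fopp y)) y = x.
Proof. rewrite <- FaddA, (FaddC _ (Fopp y) y), FaddN, Fadd0. auto. Qed.

Lemma Fscal_sub (E : Frechet) al be (e : E) : Fadd (Fscal al e) (Fopp (Fscal be e)) = Fscal (al - be) e.
Proof. rewrite Fopp_scal, FscalA, <- FscalDl. f_equal. ring. Qed.

Definition vcont_on (E : Frechet) a b N (x : R -> E) : Prop :=
  forall t, a <= t <= b -> forall eps, 0 < eps -> exists delta, 0 < delta /\
    forall s, a <= s <= b -> Rabs (s - t) < delta -> mmax N (Fadd (x s) (Fopp (x t))) < eps.

Lemma cont_eval (E : Frechet) a b (f : R -> dual E) N C (x : R -> E) :
  wstar_cont_on a b f -> 0 <= C -> (forall s, a <= s <= b -> forall y, Rabs (f s y) <= C * mmax N y) ->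
  vcont_on E a b N x -> cont_on a b (fun t => f t (x t)).
Proof.
  intros hf hC hb hx t ht eps heps.
  destruct (hx t ht (eps / (2 * (C + 1)))) as [d1 [hd1 H1]]. apply Rdiv_lt_0_compat; lra.
  destruct (hf (x t) t ht (eps / 2)) as [d2 [hd2 H2]]. lra.
  exists (Rmin d1 d2). split. apply Rmin_pos; auto.
  intros s hs hst. assert (l1 := Rmin_l d1 d2). assert (l2 := Rmin_r d1 d2).
  specialize (H1 s hs ltac:(lra)). specialize (H2 s hs ltac:(lra)).
  replace (f s (x s) - f t (x t)) with (f s (Fadd (x s) (Fopp (x t))) + (f s (x t) - f t (x t)))
    by (rewrite dfun_sub; ring).
  eapply Rle_lt_trans; [apply Rabs_triang|].
  assert (Rabs (f s (Fadd (x s) (Fopp (x t)))) <= C * (eps / (2 * (C + 1)))).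
  { eapply Rle_trans; [apply hb; auto|]. apply Rmult_le_compat_l; auto. lra. }
  assert (C * (eps / (2 * (C + 1))) <= eps / 2).
  { unfold Rdiv. rewrite Rinv_mult. apply Rle_trans with ((C + 1) * (eps * (/ 2 * / (C + 1)))).
    apply Rmult_le_compat_r. apply Rmult_le_pos. lra. apply Rmult_le_pos. lra. left; apply Rinv_0_lt_compat; lra. lra.
    right. field. lra. }
  lra.
Qed.

Lemma mu_lip (E : Frechet) a b (mu mu' : R -> E) N : is_C1 a b mu mu' ->
  forall t, a <= t <= b -> exists delta, 0 < delta /\ forall s, a <= s <= b -> Rabs (s - t) < delta ->
    mmax N (Fadd (mu s) (Fopp (mu t))) <= Rabs (s - t) * (mmax N (mu' t) + 1).
Proof.
  intros [h1 _] t ht. destruct (h1 t ht N 1 Rlt_0_1) as [d [hd H]]. exists d; split; auto.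
  intros s hs hst. destruct (Req_dec s t) as [->|hne].
  { rewrite FaddN, mmax0. rewrite Rminus_eq_0, Rabs_R0. lra. }
  assert (hh : s - t <> 0) by lra.
  specialize (H (s - t) hh ltac:(replace (t + (s - t)) with s by ring; auto) hst).
  replace (t + (s - t)) with s in H by ring.
  apply Fball_mmax in H.
  set (Q := Fscal (/ (s - t)) (Fadd (mu s) (Fopp (mu t)))) in *.
  assert (EQ : Fadd (mu s) (Fopp (mu t)) = Fscal (s - t) Q).
  { unfold Q. rewrite FscalA, Rinv_r, Fscal1 by auto. auto. }
  rewrite EQ, mmax_scal. apply Rmult_le_compat_l. apply Rabs_pos.
  rewrite <- (Fsub_add _ Q (mu' t)). eapply Rle_trans; [apply mmax_tri|]. lra.
Qed.

Lemma mu_vcont (E : Frechet) a b (mu mu' : R -> E) N : is_C1 a b mu mu' -> vcont_on E a b N mu.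
Proof.
  intros hC t ht eps heps. destruct (mu_lip E a b mu mu' N hC t ht) as [d [hd H]].
  assert (hM := mmax_nonneg E N (mu' t)).
  exists (Rmin d (eps / (mmax N (mu' t) + 1))). split. apply Rmin_pos; auto. apply Rdiv_lt_0_compat; lra.
  intros s hs hst. assert (l1 := Rmin_l d (eps / (mmax N (mu' t) + 1))).
  assert (l2 := Rmin_r d (eps / (mmax N (mu' t) + 1))).
  eapply Rle_lt_trans; [apply H; auto; lra|].
  apply Rlt_le_trans with (eps / (mmax N (mu' t) + 1) * (mmax N (mu' t) + 1)).
  apply Rmult_lt_compat_r; lra. right; field; lra.
Qed.

Lemma mu'_vcont (E : Frechet) a b (mu mu' : R -> E) N : is_C1 a b mu mu' -> vcont_on E a b N mu'.
Proof.
  intros [_ h2] t ht eps heps. destruct (h2 t ht N eps heps) as [d [hd H]]. exists d; split; auto.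
  intros s hs hst. apply Fball_mmax. auto.
Qed.

Lemma mu_der (E : Frechet) a b (mu mu' : R -> E) (l : dual E) N C : is_C1 a b mu mu' -> 0 <= C ->
  (forall y, Rabs (l y) <= C * mmax N y) -> der_on a b (fun s => l (mu s)) (fun s => l (mu' s)).
Proof.
  intros [h1 _] hC hb t ht eps heps.
  destruct (h1 t ht N (eps / (C + 1))) as [d [hd H]]. apply Rdiv_lt_0_compat; lra.
  exists d; split; auto. intros s hs hst.
  destruct (Req_dec s t) as [->|hne].
  { replace (l (mu t) - l (mu t) - (t - t) * l (mu' t)) with 0 by ring.
    rewrite Rminus_eq_0, !Rabs_R0. lra. }
  assert (hh : s - t <> 0) by lra.
  specialize (H (s - t) hh ltac:(replace (t + (s - t)) with s by ring; auto) hst).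
  replace (t + (s - t)) with s in H by ring.
  apply Fball_mmax in H.
  set (Q := Fscal (/ (s - t)) (Fadd (mu s) (Fopp (mu t)))) in *.
  replace (l (mu s) - l (mu t) - (s - t) * l (mu' t)) with ((s - t) * l (Fadd Q (Fopp (mu' t)))).
  2:{ unfold Q. rewrite dfun_sub, dfun_scal, dfun_sub. field. auto. }
  rewrite Rabs_mult, Rmult_comm. apply Rmult_le_compat_r. apply Rabs_pos.
  eapply Rle_trans; [apply hb|].
  apply Rle_trans with (C * (eps / (C + 1))). apply Rmult_le_compat_l; lra.
  apply Rle_trans with ((C + 1) * (eps / (C + 1))). apply Rmult_le_compat_r. left; apply Rdiv_lt_0_compat; lra. lra.
  right; field; lra.
Qed.

Lemma int_bound a b phi t1 t2 M : a <= b -> cont_on a b phi -> a <= t1 <= b -> a <= t2 <= b ->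
  (forall r, Rmin t1 t2 <= r <= Rmax t1 t2 -> Rabs (phi r) <= M) ->
  Rabs (RInt phi t1 t2) <= Rabs (t2 - t1) * M.
Proof.
  intros hab hc h1 h2 hM. destruct (Rle_dec t1 t2) as [hle|hle].
  - rewrite (Rabs_pos_eq (t2 - t1)) by lra. apply abs_RInt_le_const; auto. apply (cont_ex a b); auto.
    intros r hr. apply hM. rewrite Rmin_left, Rmax_right; lra.
  - rewrite <- (opp_RInt_swap phi t2 t1) by (apply (cont_ex a b); auto).
    change (opp (RInt phi t2 t1)) with (- RInt phi t2 t1). rewrite Rabs_Ropp.
    rewrite (Rabs_left (t2 - t1)) by lra. replace (- (t2 - t1)) with (t1 - t2) by ring.
    apply abs_RInt_le_const; auto. lra. apply (cont_ex a b); auto.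
    intros r hr. apply hM. rewrite Rmin_right, Rmax_left; lra.
Qed.

Lemma backward (E : Frechet) (a b : R) (f g : R -> dual E)
  (hab : a < b) (hf : wstar_cont_on a b f) (hg : wstar_cont_on a b g)
  (HC : forall t1 t2, a <= t1 <= b -> a <= t2 <= b -> forall e : E, hmap a f g t1 e = hmap a f g t2 e)
  (mu mu' : R -> E) (hC : is_C1 a b mu mu') (ha : mu a = Fzero) (hb : mu b = Fzero) :
  Rint (fun t => f t (mu t) + g t (mu' t)) a b = 0.
Proof.
  destruct (equicont E a b f ltac:(lra) hf) as [N1 [C1 [hC1 B1]]].
  destruct (equicont E a b g ltac:(lra) hg) as [N2 [C2 [hC2 B2]]].
  assert (Hex : forall x t1 t2, a <= t1 <= b -> a <= t2 <= b -> ex_RInt (fun r => f r x) t1 t2).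
  { intros x t1 t2 h1 h2. apply (cont_ex a b); auto; try lra. apply wcont; auto. }
  assert (Hg : forall t, a <= t <= b -> forall x, g t x = g a x + RInt (fun r => f r x) a t).
  { intros t ht x. specialize (HC t a ht ltac:(lra) x). unfold hmap in HC.
    rewrite !Rint_RInt in HC by (apply Hex; lra).
    assert (Hz : RInt (fun r => f r x) a a = 0) by (rewrite RInt_point; reflexivity). lra. }
  assert (Hgd : forall s t, a <= s <= b -> a <= t <= b -> forall x,
             g s x - g t x = RInt (fun r => f r x) t s).
  { intros s t hs ht x. rewrite (Hg s hs), (Hg t ht).
    assert (H := RInt_Chasles (fun r => f r x) a t s (Hex x a t ltac:(lra) ht) (Hex x t s ht hs)).
    change (plus (RInt (fun r => f r x) a t) (RInt (fun r => f r x) t s)) with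
      (RInt (fun r => f r x) a t + RInt (fun r => f r x) t s) in H. lra. }
  set (k := fun t => g t (mu t)).
  set (k' := fun t => f t (mu t) + g t (mu' t)).
  assert (hk' : cont_on a b k').
  { apply cont_plus. lra. apply (cont_eval E a b f N1 C1); auto. eapply mu_vcont; eauto.
    apply (cont_eval E a b g N2 C2); auto. eapply mu'_vcont; eauto. }
  assert (hk : der_on a b k k').
  { intros t ht eps heps.
    destruct (mu_der E a b mu mu' (g t) N2 C2 hC hC2 (B2 t ht) t ht (eps / 2) ltac:(lra)) as [d1 [hd1 H1]].
    destruct (mu_lip E a b mu mu' N1 hC t ht) as [d2 [hd2 H2]].
    destruct (hf (mu t) t ht (eps / 4) ltac:(lra)) as [d3 [hd3 H3]].
    set (L := mmax N1 (mu' t) + 1).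
    assert (hL : 0 < L) by (unfold L; pose proof (mmax_nonneg E N1 (mu' t)); lra).
    set (d4 := eps / (4 * (C1 + 1) * L)).
    assert (hd4 : 0 < d4) by (unfold d4; apply Rdiv_lt_0_compat; [lra|]; apply Rmult_lt_0_compat; lra).
    exists (Rmin (Rmin d1 d2) (Rmin d3 d4)). split. repeat apply Rmin_pos; auto.
    intros s hs hst.
    assert (l1 := Rmin_l (Rmin d1 d2) (Rmin d3 d4)). assert (l2 := Rmin_r (Rmin d1 d2) (Rmin d3 d4)).
    assert (l3 := Rmin_l d1 d2). assert (l4 := Rmin_r d1 d2).
    assert (l5 := Rmin_l d3 d4). assert (l6 := Rmin_r d3 d4).
    specialize (H1 s hs ltac:(lra)). specialize (H2 s hs ltac:(lra)). simpl in H1.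
    set (c := f t (mu t)).
    assert (HX : g s (mu s) - g t (mu s) - (s - t) * c = RInt (fun r => f r (mu s) - c) t s).
    { rewrite Hgd by auto.
      assert (H := RInt_minus (fun r => f r (mu s)) (fun _ => c) t s (Hex (mu s) t s ht hs) (ex_RInt_const _ _ _)).
      rewrite RInt_const in H. change (scal (s - t) c) with ((s - t) * c) in H.
      change (minus (RInt (fun r => f r (mu s)) t s) ((s - t) * c)) with
        (RInt (fun r => f r (mu s)) t s - (s - t) * c) in H.
      rewrite <- H. reflexivity. }
    assert (HXb : Rabs (RInt (fun r => f r (mu s) - c) t s) <= Rabs (s - t) * (eps / 2)).
    { apply (int_bound a b); try lra.
      apply cont_minus. lra. apply wcont; auto. apply cont_const.
      intros r hr.
      assert (hrJ : a <= r <= b) by (unfold Rmin, Rmax in hr; destruct Rle_dec; lra).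
      assert (hrt : Rabs (r - t) < d3).
      { apply Rle_lt_trans with (Rabs (s - t)); [|lra].
        unfold Rmin, Rmax in hr; destruct Rle_dec; unfold Rabs; repeat destruct Rcase_abs; lra. }
      specialize (H3 r hrJ hrt).
      replace (f r (mu s) - c) with (f r (Fadd (mu s) (Fopp (mu t))) + (f r (mu t) - f t (mu t)))
        by (unfold c; rewrite dfun_sub; ring).
      eapply Rle_trans; [apply Rabs_triang|].
      assert (Rabs (f r (Fadd (mu s) (Fopp (mu t)))) <= eps / 4).
      { eapply Rle_trans; [apply B1; auto|].
        apply Rle_trans with (C1 * (Rabs (s - t) * L)). apply Rmult_le_compat_l; auto.
        apply Rle_trans with ((C1 + 1) * (d4 * L)).
        apply Rmult_le_compat; try lra. apply Rmult_le_pos; [apply Rabs_pos|lra].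
        apply Rmult_le_compat_r; lra.
        right. unfold d4. field. lra. }
      lra. }
    unfold k, k'.
    replace (g s (mu s) - g t (mu t) - (s - t) * (f t (mu t) + g t (mu' t)))
      with ((g s (mu s) - g t (mu s) - (s - t) * c) + (g t (mu s) - g t (mu t) - (s - t) * g t (mu' t)))
      by (unfold c; ring).
    rewrite HX. eapply Rle_trans; [apply Rabs_triang|]. lra. }
  rewrite (FTC2 a b k k' hab hk hk'). unfold k. rewrite ha, hb, !dfun0. ring.
Qed.

Lemma scal_C1 (E : Frechet) a b (phi psi : R -> R) (e : E) : der_on a b phi psi -> cont_on a b psi ->
  is_C1 a b (fun t => Fscal (phi t) e) (fun t => Fscal (psi t) e).
Proof.
  intros hd hc. assert (hM := mmax_nonneg E). split.
  - intros t ht N eps heps. specialize (hM N e).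
    destruct (hd t ht (eps / (mmax N e + 1))) as [d [hd0 H]]. apply Rdiv_lt_0_compat; lra.
    exists d; split; auto. intros h hh hth hlt.
    specialize (H (t + h) hth ltac:(replace (t + h - t) with h by ring; auto)).
    replace (t + h - t) with h in H by ring.
    apply Fball_mmax. rewrite Fscal_sub, FscalA, Fscal_sub, mmax_scal.
    assert (hq : Rabs (/ h * (phi (t + h) - phi t) - psi t) <= eps / (mmax N e + 1)).
    { replace (/ h * (phi (t + h) - phi t) - psi t) with (/ h * (phi (t + h) - phi t - h * psi t)) by (field; auto).
      rewrite Rabs_mult, Rabs_inv. apply Rmult_le_reg_l with (Rabs h). apply Rabs_pos_lt; auto.
      rewrite <- Rmult_assoc, Rinv_r, Rmult_1_l by (apply Rabs_no_R0; auto). lra. }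
    apply Rle_lt_trans with (eps / (mmax N e + 1) * mmax N e).
    apply Rmult_le_compat_r; auto.
    apply Rlt_le_trans with (eps / (mmax N e + 1) * (mmax N e + 1)).
    apply Rmult_lt_compat_l. apply Rdiv_lt_0_compat; lra. lra. right; field; lra.
  - intros t ht N eps heps. specialize (hM N e).
    destruct (hc t ht (eps / (mmax N e + 1))) as [d [hd0 H]]. apply Rdiv_lt_0_compat; lra.
    exists d; split; auto. intros s hs hst. specialize (H s hs hst).
    apply Fball_mmax. rewrite Fscal_sub, mmax_scal.
    apply Rle_lt_trans with (eps / (mmax N e + 1) * mmax N e).
    apply Rmult_le_compat_r; lra.
    apply Rlt_le_trans with (eps / (mmax N e + 1) * (mmax N e + 1)).
    apply Rmult_lt_compat_l. apply Rdiv_lt_0_compat; lra. lra. right; field; lra.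
Qed.

Lemma forward (E : Frechet) (a b : R) (f g : R -> dual E)
  (hab : a < b) (hf : wstar_cont_on a b f) (hg : wstar_cont_on a b g)
  (HI : forall mu mu' : R -> E, is_C1 a b mu mu' -> mu a = Fzero -> mu b = Fzero ->
     Rint (fun t => f t (mu t) + g t (mu' t)) a b = 0) (e : E) :
  exists c, forall t, a <= t <= b -> hmap a f g t e = c.
Proof.
  assert (hab' : a <= b) by lra.
  set (u := fun s => f s e). set (v := fun s => g s e).
  assert (hu : cont_on a b u) by (apply wcont; auto).
  assert (hv : cont_on a b v) by (apply wcont; auto).
  set (U := fun t => RInt u a t).
  assert (hU : der_on a b U u) by (apply FTC1; auto).
  assert (hUc : cont_on a b U) by (eapply der_cont; eauto).
  set (w := fun t => v t - U t).
  assert (hw : cont_on a b w) by (apply cont_minus; auto).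
  set (c := RInt w a b / (b - a)).
  set (psi := fun t => w t - c).
  assert (hpsi : cont_on a b psi) by (apply cont_minus; auto; apply cont_const).
  set (phi := fun t => RInt psi a t).
  assert (hphi : der_on a b phi psi) by (apply FTC1; auto).
  assert (hphic : cont_on a b phi) by (eapply der_cont; eauto).
  assert (hpa : phi a = 0) by (unfold phi; rewrite RInt_point; reflexivity).
  assert (hpb : phi b = 0).
  { unfold phi, psi.
    assert (H := RInt_minus w (fun _ => c) a b (cont_ex a b w a b hab' hw ltac:(lra) ltac:(lra)) (ex_RInt_const _ _ _)).
    rewrite RInt_const in H. change (scal (b - a) c) with ((b - a) * c) in H.
    change (minus (RInt w a b) ((b - a) * c)) with (RInt w a b - (b - a) * c) in H.
    assert (H2 : RInt w a b - (b - a) * c = 0) by (unfold c; field; lra).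
    rewrite <- H2. exact H. }
  exists c. intros t ht.
  assert (Hh : hmap a f g t e = w t).
  { unfold hmap, w, v, U. rewrite Rint_RInt. reflexivity. apply (cont_ex a b); auto; lra. }
  rewrite Hh.
  assert (HC1 := scal_C1 E a b phi psi e hphi hpsi).
  specialize (HI _ _ HC1). simpl in HI.
  rewrite hpa, hpb, Fscal0 in HI. specialize (HI eq_refl eq_refl).
  assert (EF : (fun t => f t (Fscal (phi t) e) + g t (Fscal (psi t) e)) = (fun t => phi t * u t + psi t * v t)).
  { apply functional_extensionality. intros x. unfold u, v. rewrite !dfun_scal. reflexivity. }
  rewrite EF in HI.
  assert (hA : cont_on a b (fun t => phi t * u t + psi t * v t)) by (apply cont_plus; auto; apply cont_mult; auto).
  rewrite Rint_RInt in HI by (apply (cont_ex a b); auto; lra).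
  assert (hB : der_on a b (fun t => phi t * U t) (fun t => psi t * U t + phi t * u t)) by (apply der_mult; auto).
  assert (hBc : cont_on a b (fun t => psi t * U t + phi t * u t)) by (apply cont_plus; auto; apply cont_mult; auto).
  assert (HB := FTC2R a b _ _ hab hB hBc). cbv beta in HB. rewrite hpa, hpb in HB.
  assert (Hq : RInt (fun t => psi t * psi t) a b = 0).
  { assert (Eq : (fun t => psi t * psi t) =
       (fun t => minus (minus (phi t * u t + psi t * v t) (psi t * U t + phi t * u t)) (scal c (psi t)))).
    { apply functional_extensionality. intros x. unfold psi, w, minus, plus, opp, scal. simpl.
      unfold mult; simpl. ring. }
    rewrite Eq.
    set (F1 := fun t => phi t * u t + psi t * v t).
    set (F2 := fun t => psi t * U t + phi t * u t).
    assert (e1 : ex_RInt F1 a b) by (apply (cont_ex a b); auto; lra).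
    assert (e2 : ex_RInt F2 a b) by (apply (cont_ex a b); auto; lra).
    assert (e3 : ex_RInt psi a b) by (apply (cont_ex a b); auto; lra).
    assert (R1 := RInt_minus (fun t => minus (F1 t) (F2 t)) (fun t => scal c (psi t)) a b
                   (ex_RInt_minus _ _ _ _ e1 e2) (ex_RInt_scal _ _ _ c e3)).
    assert (R2 := RInt_minus F1 F2 a b e1 e2).
    assert (R3 := RInt_scal psi a b c e3).
    assert (R1' : RInt (fun t => (F1 t - F2 t) - c * psi t) a b = RInt (fun t => F1 t - F2 t) a b - RInt (fun t => c * psi t) a b) by exact R1.
    assert (R2' : RInt (fun t => F1 t - F2 t) a b = RInt F1 a b - RInt F2 a b) by exact R2.
    assert (R3' : RInt (fun t => c * psi t) a b = c * RInt psi a b) by exact R3.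
    change (RInt (fun t => (F1 t - F2 t) - c * psi t) a b = 0).
    rewrite R1', R2', R3'. unfold F1, F2.
    assert (Hpsi : RInt psi a b = 0) by exact hpb.
    rewrite HI, HB, Hpsi. match goal with |- ?x = ?y => change (@eq R x y) end. ring. }
  assert (Z := zero_int a b (fun t => psi t * psi t) hab (cont_mult a b psi psi hab' hpsi hpsi)
     ltac:(intros; apply Rle_0_sqr) Hq t ht).
  simpl in Z. unfold psi in Z. nra.
Qed.

Theorem proposition5 (E : Frechet) (a b : R) (f g : R -> dual E)
  (hab : a < b) (hf : wstar_cont_on a b f) (hg : wstar_cont_on a b g) :
  (forall mu mu' : R -> E, is_C1 a b mu mu' -> mu a = Fzero -> mu b = Fzero ->
     Rint (fun t => f t (mu t) + g t (mu' t)) a b = 0)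
  <->
  (forall t1 t2, a <= t1 <= b -> a <= t2 <= b ->
     forall e : E, hmap a f g t1 e = hmap a f g t2 e).
Proof.
  split.
  - intros HI t1 t2 h1 h2 e. destruct (forward E a b f g hab hf hg HI e) as [c Hc].
    rewrite (Hc t1 h1), (Hc t2 h2). reflexivity.
  - intros HC mu mu' hC ha hb. apply (backward E a b f g hab hf hg HC mu mu' hC ha hb).
Qed.
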